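(* Let $d\geq 1$, let $p\in[0,1]$ with $p<p_d=\frac{2d+1}{4d}$, let $(S_n)$ be the $d$-dimensional elephant random walk with memory parameter $p$, and let $G_n=\frac{1}{n}\sum_{k=1}^n S_k$ be its center of mass. Then $$\lim_{n\to\infty}\frac{1}{n}G_n=0 \quad\text{almost surely.}$$
   Context: The $d$-dimensional elephant random walk (ERW) with memory parameter $p\in[0,1]$ is defined as follows. Let $e_1,\dots,e_d$ be the standard basis of $\mathbb{R}^d$; the $2d$ directions are $\pm e_1,\dots,\pm e_d$. Set $S_0=0$. The first step $X_1$ is uniformly distributed on the $2d$ directions. For $n\geq 1$, given $X_1,\dots,X_n$, an index $k$ is chosen uniformly at random in $\{1,\dots,n\}$, and then $X_{n+1}=X_k$ with probability $p$, while $X_{n+1}$ equals each of the $2d-1$ remaining directions with probability $(1-p)/(2d-1)$. The position is $S_{n+1}=S_n+X_{n+1}$. The regime $p<p_d$ is called the diffusive regime. *)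

(* Defs.v *)
From HB Require Import structures.
From mathcomp Require Import all_boot all_order all_algebra.
From mathcomp Require Import all_classical all_reals all_analysis.
Set Implicit Arguments. Unset Strict Implicit. Unset Printing Implicit Defensive.
Import Order.TTheory GRing.Theory Num.Theory.
Import numFieldNormedType.Exports.
Local Open Scope classical_set_scope.
Local Open Scope ring_scope.

(* A direction in Z^d: (i, b) stands for +e_i if b = true, -e_i if b = false. *)
Definition dir (d : nat) := ('I_d * bool)%type.

Definition dir_vec {R : realType} {d : nat} (x : dir d) : 'rV[R]_d :=
  \row_j (if j == x.1 then (if x.2 then 1 else -1) else 0).

(* Conditional probability that X_{m+1} = y given X_1 = xs 1, ..., X_m = xs m
   (m >= 1): a uniform index k in {1..m} is chosen; X_{m+1} = X_k w.p. p, and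
   each of the 2d-1 other directions w.p. (1-p)/(2d-1). *)
Definition erw_trans {R : realType} {d : nat} (p : R) (m : nat)
    (xs : nat -> dir d) (y : dir d) : R :=
  m%:R^-1 * \sum_(1 <= k < m.+1)
     (if xs k == y then p else (1 - p) / (2 * d%:R - 1)).

Definition erw_path_prob {R : realType} {d : nat} (p : R) (n : nat)
    (xs : nat -> dir d) : R :=
  (2 * d%:R)^-1 * \prod_(1 <= m < n) erw_trans p m xs (xs m.+1).

(* X : nat -> T -> dir d is the step sequence of the d-dimensional elephant
   random walk with memory parameter p under P (steps are X 1, X 2, ...;
   X 0 is irrelevant): the step events are measurable and the finite-dimensional
   laws are those given by the ERW dynamics. *)
Definition is_ERW {R : realType} {dT : measure_display} {T : measurableType dT}
    (P : probability T R) (d : nat) (p : R) (X : nat -> T -> dir d) : Prop :=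
  (forall k (x : dir d), measurable [set w | X k w = x]) /\
  (forall (n : nat) (xs : nat -> dir d), (1 <= n)%N ->
     P [set w | forall k, (1 <= k <= n)%N -> X k w = xs k]
       = (erw_path_prob p n xs)%:E).

Definition erw_pos {R : realType} {T : Type} {d : nat} (X : nat -> T -> dir d)
    (n : nat) (w : T) : 'rV[R]_d :=
  \sum_(1 <= k < n.+1) dir_vec (X k w).

Definition erw_center {R : realType} {T : Type} {d : nat} (X : nat -> T -> dir d)
    (n : nat) (w : T) : 'rV[R]_d :=
  n%:R^-1 *: \sum_(1 <= k < n.+1) erw_pos X k w.

(* Main.v *)
Require Import Defs.
From HB Require Import structures.
From mathcomp Require Import all_boot all_order all_algebra.
From mathcomp Require Import all_classical all_reals all_analysis.
From mathcomp Require Import ring lra zify.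
Import Order.TTheory GRing.Theory Num.Theory.
Import numFieldNormedType.Exports.
Local Open Scope classical_set_scope.
Local Open Scope ring_scope.
Set Implicit Arguments. Unset Strict Implicit.
Section Comb.
Variables (R : realType) (d : nat) (p : R) (y0 : dir d).
Hypotheses (d1 : (1 <= d)%N) (p0 : 0 <= p) (p1 : p <= 1).

Definition dirc (x : dir d) (j : 'I_d) : R :=
  if j == x.1 then (if x.2 then 1 else -1) else 0.
Definition Sv (s : seq (dir d)) j : R := \sum_(x <- s) dirc x j.
Definition Qs (s : seq (dir d)) : R := \sum_j (Sv s j)^+2.
Definition xsq (s : seq (dir d)) : nat -> dir d := fun k => nth y0 s k.-1.
Definition pr (s : seq (dir d)) : R := erw_path_prob p (size s) (xsq s).
Fixpoint seqs n : seq (seq (dir d)) :=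
  if n is n'.+1 then [seq rcons s y | s <- seqs n', y <- index_enum (dir d)]
  else [:: [::]].
Definition qq : R := (1 - p) / (2 * d%:R - 1).
Definition Lf (s : seq (dir d)) (y : dir d) : R := \sum_j Sv s j * dirc y j.

Lemma dpos : 0 < 2 * d%:R - 1 :> R.
Proof. have h : 1 <= d%:R :> R by rewrite ler1n. lra. Qed.

Lemma qq_ge0 : 0 <= qq.
Proof. rewrite /qq divr_ge0 // ?subr_ge0 //; have h := dpos; lra. Qed.

Lemma qq_eq : qq * (2 * d%:R - 1) = 1 - p.
Proof. rewrite /qq mulrVK //; rewrite unitfE; exact: lt0r_neq0 dpos. Qed.

Lemma trans_ge0 m (xs : nat -> dir d) y : 0 <= erw_trans p m xs y.
Proof.
rewrite /erw_trans mulr_ge0 // ?invr_ge0 ?ler0n // sumr_ge0 // => k _.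
by case: ifP => _ //; exact: qq_ge0.
Qed.

Lemma pr_ge0 s : 0 <= pr s.
Proof.
rewrite /pr /erw_path_prob mulr_ge0 // ?invr_ge0 ?mulr_ge0 ?ler0n //.
by rewrite prodr_ge0 // => m _; exact: trans_ge0.
Qed.

Lemma trans_ext m (xs xs' : nat -> dir d) y : (forall k, (1 <= k <= m)%N -> xs k = xs' k) ->
  erw_trans p m xs y = erw_trans p m xs' y.
Proof.
move=> H; rewrite /erw_trans; congr (_ * _); apply: eq_big_nat => k hk.
by rewrite H.
Qed.

Lemma xsq_rcons s y k : (k.-1 < size s)%N -> xsq (rcons s y) k = xsq s k.
Proof. by move=> h; rewrite /xsq nth_rcons h. Qed.

Lemma pr_rcons s y : (1 <= size s)%N ->
  pr (rcons s y) = pr s * erw_trans p (size s) (xsq s) y.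
Proof.
move=> h; rewrite /pr /erw_path_prob size_rcons big_nat_recr //= -mulrA.
congr (_ * (_ * _)).
  apply: eq_big_nat => m /andP[m1 m2].
  rewrite xsq_rcons /=; last by lia.
  apply: trans_ext => k /andP[k1 k2]; apply: xsq_rcons; lia.
rewrite /xsq /= nth_rcons ltnn eqxx.
apply: trans_ext => k /andP[k1 k2]; apply: xsq_rcons; lia.
Qed.

Lemma sum_dir (F : dir d -> R) :
  \sum_(y : dir d) F y = \sum_(i < d) (F (i, true) + F (i, false)).
Proof.
transitivity (\sum_(i < d) \sum_(b : bool) F (i, b)).
  rewrite (pair_big xpredT xpredT (fun i b => F (i, b)) ) /=.
  by apply: eq_bigr; case.
by apply: eq_bigr => i _; rewrite big_bool. Qed.


Lemma sum_dirc j : \sum_(y : dir d) dirc y j = 0.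
Proof.
rewrite sum_dir big1 // => i _; rewrite /dirc /=.
by case: (j == i); rewrite ?addr0 ?subrr.
Qed.

Lemma dirc_sq y : \sum_j (dirc y j)^+2 = 1.
Proof.
case: y => i b; rewrite (bigD1 i) //= big1 ?addr0.
  by rewrite /dirc /= eqxx; case: b; rewrite ?sqrrN expr1n.
by move=> j /negbTE hj; rewrite /dirc /= hj expr0n.
Qed.

Lemma Sv_rcons s y j : Sv (rcons s y) j = Sv s j + dirc y j.
Proof. by rewrite /Sv -cats1 big_cat big_seq1. Qed.

Lemma Qs_rcons s y : Qs (rcons s y) = Qs s + 2 * Lf s y + 1.
Proof.
rewrite /Qs /Lf -[X in _ = _ + X](dirc_sq y) mulr_sumr -!big_split /=.
apply: eq_bigr => j _; rewrite Sv_rcons; ring. Qed.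


Lemma Lf_sum0 s : \sum_(y : dir d) Lf s y = 0.
Proof.
rewrite /Lf exchange_big /= big1 // => j _.
by rewrite -mulr_sumr sum_dirc mulr0.
Qed.

Lemma Lf_seq s : \sum_(x <- s) Lf s x = Qs s.
Proof.
rewrite /Lf exchange_big /=; apply: eq_bigr => j _.
by rewrite -mulr_sumr expr2.
Qed.

Lemma sum_xsq s (L : dir d -> R) :
  \sum_(1 <= k < (size s).+1) L (xsq s k) = \sum_(x <- s) L x.
Proof.
rewrite big_add1 /= (big_nth y0) /xsq /=.
by apply: eq_big_nat.
Qed.

Lemma trans_lin s (L : dir d -> R) : (1 <= size s)%N ->
  \sum_(y : dir d) erw_trans p (size s) (xsq s) y * L y =
  (size s)%:R^-1 * ((size s)%:R * qq * \sum_(y : dir d) L y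
     + (p - qq) * \sum_(x <- s) L x).
Proof.
move=> hs; rewrite /erw_trans.
under eq_bigr do rewrite -mulrA.
rewrite -mulr_sumr; congr (_ * _).
under eq_bigr do rewrite mulr_suml.
rewrite exchange_big /= -(sum_xsq s L) -/qq.
have -> : (size s)%:R * qq * \sum_y L y =
   \sum_(1 <= k < (size s).+1) (qq * \sum_y L y).
  by rewrite sumr_const_nat subn1 /= -[RHS]mulr_natl mulrA.
rewrite [(p - qq) * _]mulr_sumr -big_split /=.
apply: eq_bigr => k _.
rewrite (bigD1 (xsq s k)) //= eqxx.
rewrite [in RHS](bigD1 (xsq s k)) //= mulrDr -addrA.
rewrite (eq_bigr (fun y => qq * L y)); last first.
  by move=> y /negbTE hy; rewrite eq_sym hy.
rewrite -mulr_sumr; ring.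
Qed.

Lemma size_seqs n s : s \in seqs n -> size s = n.
Proof.
elim: n s => [|n IH] s /=; first by rewrite inE => /eqP ->.
by case/allpairsP => -[s' y] /= [/IH h _ ->]; rewrite size_rcons h.
Qed.

Lemma mem_seqs n s : size s = n -> s \in seqs n.
Proof.
elim: n s => [|n IH] s; first by case: s.
case/lastP: s => [//|s y]; rewrite size_rcons => -[/IH h] /=.
by apply/allpairsPdep; exists s, y; rewrite mem_index_enum.
Qed.

Lemma big_seqs_S n (F : seq (dir d) -> R) :
  \sum_(s <- seqs n.+1) F s = \sum_(s <- seqs n) \sum_(y : dir d) F (rcons s y).
Proof. by rewrite /= big_allpairs_dep. Qed.

Lemma trans_sum1 s : (1 <= size s)%N ->
  \sum_(y : dir d) erw_trans p (size s) (xsq s) y = 1.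
Proof.
move=> hs.
have := trans_lin (fun _ => 1) hs.
under eq_bigr do rewrite mulr1.
move=> ->; rewrite -(sum_xsq s) sumr_const_nat subn1 /= sum_dir sumr_const card_ord.
have hn : (size s)%:R != 0 :> R by rewrite pnatr_eq0 -lt0n.
rewrite -[(1 + 1) *+ d]mulr_natr.
have -> : (size s)%:R^-1 * ((size s)%:R * qq * ((1 + 1) * d%:R) + (p - qq) * (size s)%:R)
   = qq * (2 * d%:R - 1) + p by field.
rewrite qq_eq; ring.
Qed.

Lemma trans_Lf s : (1 <= size s)%N ->
  \sum_(y : dir d) erw_trans p (size s) (xsq s) y * Lf s y
  = (size s)%:R^-1 * (p - qq) * Qs s.
Proof.
move=> hs; rewrite trans_lin // Lf_sum0 Lf_seq mulr0 add0r mulrA //.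
Qed.

Definition Pn n := \sum_(s <- seqs n) pr s.
Definition Vn n := \sum_(s <- seqs n) pr s * Qs s.

Lemma pr1 y : pr [:: y] = (2 * d%:R)^-1.
Proof. by rewrite /pr /erw_path_prob /= big_geq // mulr1. Qed.

Lemma Qs1 y : Qs [:: y] = 1.
Proof.
rewrite -(dirc_sq y) /Qs; apply: eq_bigr => j _.
by rewrite /Sv big_seq1.
Qed.

Lemma sum_const_dir (c : R) : \sum_(y : dir d) c = 2 * d%:R * c.
Proof.
rewrite sum_dir sumr_const card_ord -mulr_natl; ring.
Qed.

Lemma Pn1 : Pn 1 = 1.
Proof.
rewrite /Pn big_seqs_S big_seq1.
under eq_bigr do rewrite pr1.
rewrite sum_const_dir mulfV // lt0r_neq0 //.
have h := dpos; lra.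
Qed.

Lemma Vn1 : Vn 1 = 1.
Proof.
rewrite /Vn big_seqs_S big_seq1.
under eq_bigr do rewrite pr1 Qs1 mulr1.
rewrite sum_const_dir mulfV // lt0r_neq0 //.
have h := dpos; lra.
Qed.

Lemma PnS n : (1 <= n)%N -> Pn n.+1 = Pn n.
Proof.
move=> hn; rewrite /Pn big_seqs_S !big_seq; apply: eq_bigr => s hs.
have hs' := @size_seqs n s hs.
under eq_bigr do rewrite pr_rcons ?hs' //.
by rewrite -mulr_sumr -hs' trans_sum1 ?mulr1 // hs'.
Qed.

Lemma Pn_eq1 n : (1 <= n)%N -> Pn n = 1.
Proof.
elim: n => [//|n IH] _; case: n IH => [|n] IH; first exact: Pn1.
by rewrite PnS // IH.
Qed.

Lemma VnS n : (1 <= n)%N ->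
  Vn n.+1 = Vn n + 2 * n%:R^-1 * (p - qq) * Vn n + Pn n.
Proof.
move=> hn; rewrite /Vn /Pn big_seqs_S !big_seq.
rewrite mulr_sumr -!big_split /=; apply: eq_bigr => s hs.
have hs' := @size_seqs n s hs; subst n.
under eq_bigr do rewrite pr_rcons // Qs_rcons.
have e : forall y, pr s * erw_trans p (size s) (xsq s) y * (Qs s + 2 * Lf s y + 1)
  = pr s * (Qs s + 1) * erw_trans p (size s) (xsq s) y
    + 2 * pr s * (erw_trans p (size s) (xsq s) y * Lf s y).
  by move=> y; ring.
under eq_bigr do rewrite e.
rewrite big_split /=.
have -> : \sum_(y : dir d) pr s * (Qs s + 1) * erw_trans p (size s) (xsq s) y
  = pr s * (Qs s + 1) * \sum_(y : dir d) erw_trans p (size s) (xsq s) y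
  by rewrite mulr_sumr.
have -> : \sum_(y : dir d) 2 * pr s * (erw_trans p (size s) (xsq s) y * Lf s y)
  = 2 * pr s * \sum_(y : dir d) erw_trans p (size s) (xsq s) y * Lf s y
  by rewrite mulr_sumr.
rewrite trans_sum1 // trans_Lf //.
ring.
Qed.

Lemma Qs_ge0 s : 0 <= Qs s.
Proof. by rewrite /Qs sumr_ge0 // => j _; rewrite sqr_ge0. Qed.

Lemma Vn_ge0 n : 0 <= Vn n.
Proof. by rewrite /Vn sumr_ge0 // => s _; rewrite mulr_ge0 ?pr_ge0 ?Qs_ge0. Qed.

Definition Kc : R := Num.max 1 (1 - 2 * (p - qq))^-1.

Lemma Vn_le (ha : 2 * (p - qq) < 1) n : (1 <= n)%N -> Vn n <= Kc * n%:R.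
Proof.
have K1 : 1 <= Kc by rewrite /Kc le_max lexx.
have K2 : 1 <= Kc * (1 - 2 * (p - qq)).
  rewrite -ler_pdivrMr ?subr_gt0 // mul1r /Kc le_max lexx orbT //.
elim: n => [//|n IH] _; case: n IH => [|n] IH.
  by rewrite Vn1 mulr1.
have IH' := IH isT.
rewrite VnS // Pn_eq1 //.
set V := Vn n.+1 in IH' *.
set N := (n.+1)%:R.
have hN : 0 < N by rewrite ltr0n.
have V0 : 0 <= V by apply: Vn_ge0.
set x := V / N.
have hx : V = N * x by rewrite /x mulrC divfK // lt0r_neq0.
have x0 : 0 <= x by rewrite /x divr_ge0 // ltW.
have xK : x <= Kc by rewrite /x ler_pdivrMr // mulrC.
have -> : 2 * N^-1 * (p - qq) * V = 2 * (p - qq) * x.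
  by rewrite hx; field; rewrite lt0r_neq0.
rewrite hx.
have h2 : 2 * (p - qq) * x + 1 <= Kc.
  case: (lerP 0 (p - qq)) => ha0.
    have : 2 * (p - qq) * (Kc - x) >= 0 by rewrite mulr_ge0 // ?mulr_ge0 // subr_ge0.
    nra.
  have : 2 * (p - qq) * x <= 0.
    nra.
  move=> h; lra.
have -> : n.+2%:R = N + 1 :> R by rewrite /N -natr1.
nra.
Qed.
End Comb.
Arguments Qs {R d}. Arguments Sv {R d}. Arguments dirc {R d}. Arguments Lf {R d}.
Arguments seqs {d}.

Lemma tele (R : realType) (N m : nat) :
  \sum_(N.+1 <= k < N.+1 + m) ((k ^ 2)%:R)^-1
    <= 2 * ((N.+1)%:R^-1 - ((N.+1 + m)%:R)^-1) :> R.
Proof.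
elim: m => [|m IH]; first by rewrite addn0 big_geq // subrr mulr0.
rewrite addnS big_nat_recr ?leq_addr //=.
set x : R := (N.+1 + m)%:R.
have x1 : 1 <= x by rewrite /x ler1n addSn.
have hx : 0 < x by lra.
rewrite natrX -/x.
have -> : ((N.+1 + m).+1)%:R = x + 1 :> R by rewrite /x -natr1.
have e : 2 / x - 2 / (x + 1) - 1 / x ^+ 2 = (x - 1) / (x ^+ 2 * (x + 1)).
  by field; rewrite ?lt0r_neq0 //; lra.
have : 0 <= (x - 1) / (x ^+ 2 * (x + 1)).
  by rewrite divr_ge0 // ?subr_ge0 // mulr_ge0 // ?sqr_ge0 //; lra.
rewrite -e !mul1r => h.
have := IH; rewrite -/x => IH2. move: IH2 h. set S := (\sum_(_ <= _ < _) _). set a := x^-1. set b := (x + 1)^-1. set c := x ^- 2. set u := N.+1%:R^-1. move=> *; lra.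
Qed.

Lemma sq_ex m : exists k, (k * k <= m < k.+1 * k.+1)%N.
Proof.
elim: m => [|m [k /andP[h1 h2]]]; first by exists 0.
case: (ltnP m.+1 (k.+1 * k.+1)) => h.
  by exists k; rewrite h andbT; lia.
by exists k.+1; apply/andP; split => //; nia.
Qed.

Section Prob.
Variables (R : realType) (dT : measure_display) (T : measurableType dT)
  (P : probability T R) (d : nat) (p : R) (X : nat -> T -> dir d) (y0 : dir d).
Hypotheses (d1 : (1 <= d)%N) (p0 : 0 <= p) (p1 : p <= 1) (hE : is_ERW P p X).

Definition Cyl n (s : seq (dir d)) : set T :=
  [set w | forall k, (1 <= k <= n)%N -> X k w = xsq y0 s k].

Lemma Cyl_meas n s : measurable (Cyl n s).
Proof.
have -> : Cyl n s = \bigcap_k (if (1 <= k <= n)%N then [set w | X k w = xsq y0 s k]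
                                else setT).
  apply/seteqP; split => w /=.
    by move=> h k _; case: ifP => hk //; exact: h.
  by move=> h k hk; have := h k I; rewrite hk.
apply: bigcapT_measurable => k; case: ifP => _ //.
exact: hE.1.
Qed.

Lemma P_Cyl s : (1 <= size s)%N -> P (Cyl (size s) s) = (pr p y0 s)%:E.
Proof. by move=> hs; rewrite /Cyl hE.2. Qed.

Definition Bad n (c : R) := \big[setU/set0]_(s <- seqs n | c < Qs s) Cyl n s.

Lemma Bad_meas n c : measurable (Bad n c).
Proof. by apply: bigsetU_measurable => s _; exact: Cyl_meas. Qed.

Lemma P_bigU n (c : R) (L : seq (seq (dir d))) : (1 <= n)%N -> 0 < c ->
  (forall s, s \in L -> size s = n) ->
  (P (\big[setU/set0]_(s <- L | (c < Qs s)%R) Cyl n s) <=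
    (\sum_(s <- L) pr p y0 s * Qs s / c)%:E)%E.
Proof.
move=> hn hc; elim: L => [|a L IH] hL.
  by rewrite !big_nil measure0.
have hL' : forall s, s \in L -> size s = n.
  by move=> s hs; apply: hL; rewrite inE hs orbT.
have ha : size a = n by apply: hL; rewrite inE eqxx.
rewrite !big_cons EFinD; case: ifP => hq.
  apply: (le_trans (measureU2 _ _ _)).
  - exact: Cyl_meas.
  - by apply: bigsetU_measurable => s _; exact: Cyl_meas.
  apply: leeD; last exact: IH.
  have hP : P (Cyl n a) = (pr p y0 a)%:E by rewrite -ha P_Cyl // ha.
  have hP2 : (P (Cyl n a) <= (pr p y0 a)%:E)%E by rewrite hP.
  apply: (le_trans hP2).
  rewrite lee_fin -mulrA ler_peMr ?(pr_ge0 y0 d1 p0 p1) //.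
  by rewrite ler_pdivlMr // mul1r ltW.
apply: (le_trans (IH hL')); rewrite leeDr // lee_fin.
apply: divr_ge0; [apply: mulr_ge0; [exact: (pr_ge0 y0 d1 p0 p1) | exact: Qs_ge0] | exact: ltW].
Qed.

Lemma P_Bad n (c : R) : (1 <= n)%N -> 0 < c -> (P (Bad n c) <= (Vn p y0 n / c)%:E)%E.
Proof.
move=> hn hc; apply: (le_trans (@P_bigU n c (seqs n) hn hc _)).
  by move=> s; apply: size_seqs.
by rewrite lee_fin /Vn mulr_suml.
Qed.


Definition sw n w : seq (dir d) := map (fun k => X k w) (iota 1 n).

Lemma sw_size n w : size (sw n w) = n.
Proof. by rewrite size_map size_iota. Qed.

Lemma sw_Cyl n w : Cyl n (sw n w) w.
Proof.
move=> k /andP[k1 kn]; rewrite /xsq /sw (nth_map 0) ?size_iota; last by lia.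
by rewrite nth_iota; [congr X; lia | lia].
Qed.

Lemma in_bigU (I : eqType) (L : seq I) (Pr : pred I) (A : I -> set T) (s : I) (x : T) :
  s \in L -> Pr s -> A s x -> (\big[setU/set0]_(i <- L | Pr i) A i) x.
Proof.
elim: L => [//|a L IH]; rewrite inE big_cons => /orP[/eqP <-|hs] hP hA.
  by rewrite hP; left.
by case: ifP => _; [right|]; apply: IH.
Qed.

Lemma notBad n (c : R) w : ~ Bad n c w -> Qs (sw n w) <= c.
Proof.
move=> hB; rewrite leNgt; apply/negP => h; apply: hB.
apply: (in_bigU (s := sw n w)) => //; last exact: sw_Cyl.
by apply: mem_seqs; rewrite sw_size.
Qed.

Lemma Sv_sw n w j : Sv (sw n w) j = (erw_pos X n w : 'rV[R]_d) 0 j.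
Proof.
rewrite /Sv /sw big_map /erw_pos summxE /index_iota subSS subn0; apply: eq_bigr => k _.
by rewrite /dir_vec mxE.
Qed.


Definition cc (j k : nat) : R := ((j.+1)%:R^-1 * (k ^ 2)%:R) ^+ 2.
Definition Good j w := exists N, forall k, (N < k)%N -> Qs (sw (k ^ 2) w) <= cc j k.

Hypothesis ha : 2 * (p - qq d p) < 1.

Lemma Kc_ge1 : 1 <= Kc d p.
Proof. by rewrite /Kc le_max lexx. Qed.

Lemma P_F j k :
  (P (Bad (k ^ 2) (cc j k)) <= ((Kc d p * (j.+1)%:R ^+ 2) / (k ^ 2)%:R)%:E)%E.
Proof.
case: k => [|k].
  rewrite /Bad /= big_cons big_nil /cc /Qs /Sv.
  under eq_bigr do rewrite big_nil expr0n.
  rewrite big1 // mulr0 expr0n /= ltxx measure0 invr0 mulr0 //.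
have hk2 : (0 < k.+1 ^ 2)%N by rewrite expn_gt0.
have hK : 0 < (k.+1 ^ 2)%:R :> R by rewrite ltr0n.
have hJ : 0 < (j.+1)%:R :> R by rewrite ltr0n.
have hc : 0 < cc j k.+1 by rewrite /cc exprn_gt0 // mulr_gt0 // invr_gt0.
apply: (le_trans (P_Bad hk2 hc)); rewrite lee_fin.
apply: (le_trans (ler_wpM2r _ (Vn_le y0 d1 p0 p1 ha hk2))).
  by rewrite invr_ge0 ltW.
rewrite le_eqVlt; apply/orP; left; apply/eqP.
rewrite /cc; field.
by rewrite !lt0r_neq0.
Qed.


Lemma ae_good j : \forall w \ae P, Good j w.
Proof.
pose F k := Bad (k ^ 2) (cc j k).
pose A := \bigcap_N \bigcup_(k in ~` `I_N.+1) F k.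
have mA : measurable A.
  apply: bigcapT_measurable => N; apply: bigcup_measurable => k _.
  exact: Bad_meas.
pose C := Kc d p * (j.+1)%:R ^+ 2.
have C0 : 0 <= C by rewrite /C mulr_ge0 // ?sqr_ge0 //; have := Kc_ge1; lra.
have tail : forall N, (P A <= (2 * C / (N.+1)%:R)%:E)%E.
  move=> N.
  apply: (le_trans (measure_sigma_subadditive_tail P (N := N.+1)
            (fun k => Bad_meas _ _) mA _)).
    by move=> w hw; exact: hw N I.
  apply: lime_le.
    by apply: is_cvg_nneseries => n _ _; exact: measure_ge0.
  apply: nearW => M.
  case: (leqP M N.+1) => hM.
    rewrite big_geq // lee_fin divr_ge0 // mulr_ge0 //.
  apply: (le_trans (lee_sum _ (fun k _ => P_F j k))).
  rewrite sumEFin lee_fin -mulr_sumr.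
  have -> : M = (N.+1 + (M - N.+1))%N by rewrite subnKC // ltnW.
  apply: (le_trans (ler_wpM2l C0 (tele R N (M - N.+1)))).
  have h1 : 0 <= ((N.+1 + (M - N.+1))%:R)^-1 :> R by rewrite invr_ge0.
  set u := ((N.+1 + _)%:R)^-1 in h1 *.
  set v := (N.+1%:R)^-1.
  rewrite mulrA -[2 * C / _]mulrA -/v.
  have : 0 <= C * u by rewrite mulr_ge0.
  move=> *; nra.
have PA0 : P A = 0.
  apply/eqP; rewrite eq_le measure_ge0 andbT.
  apply/lee_addgt0Pr => e e0; rewrite add0e.
  have hx : 0 <= 2 * C / e by apply: divr_ge0; [apply: mulr_ge0 | apply: ltW].
  have hb := archi_boundP hx.
  apply: (le_trans (tail (Num.Def.archi_bound (2 * C / e)))); rewrite lee_fin.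
  set b := (Num.Def.archi_bound _) in hb *.
  have hb1 : 0 < (b.+1)%:R :> R by rewrite ltr0n.
  rewrite ler_pdivrMr // -natr1.
  move: hb; rewrite ltr_pdivrMr // => hb; nra.
exists A; split => //.
move=> w /= nG N _.
have : ~ (forall k, (N < k)%N -> Qs (sw (k ^ 2) w) <= cc j k).
  by move=> h; apply: nG; exists N.
move/existsNP => [k /not_implyP [hk hQ]].
exists k; first by move=> /= h; lia.
case: (pselect (F k w)) => // hF; exfalso; apply: hQ; exact: (@notBad (k ^ 2) (cc j k) w hF).
Qed.


Section Det.
Variable w : T.
Let f m i := (erw_pos X m w : 'rV[R]_d) 0 i.

Lemma f0 i : f 0 i = 0.
Proof. by rewrite /f /erw_pos summxE big_geq. Qed.

Lemma fS m i : f m.+1 i = f m i + dirc (X m.+1 w) i.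
Proof.
by rewrite /f /erw_pos !summxE big_nat_recr //= /dir_vec mxE.
Qed.

Lemma dirc_le1 (y : dir d) (i : 'I_d) : `|dirc y i : R| <= 1.
Proof.
rewrite /dirc; case: ifP => _; last by rewrite normr0.
by case: y.2; rewrite ?normrN normr1.
Qed.

Lemma fdiff m t i : `|f (m + t)%N i - f m i| <= t%:R.
Proof.
elim: t => [|t IH]; first by rewrite addn0 subrr normr0.
rewrite addnS fS -natr1 addrAC.
apply: (le_trans (ler_normD _ _)); apply: lerD => //; exact: dirc_le1.
Qed.

Lemma fabs m i : `|f m i| <= m%:R.
Proof. by have := fdiff 0 m i; rewrite add0n f0 subr0. Qed.

Lemma fbound (jj N0 : nat) :
  (forall k, (N0 < k)%N -> Qs (sw (k ^ 2) w) <= cc jj k) ->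
  forall m i, `|f m i| <= 2 * (jj.+1)%:R^-1 * m%:R
                 + ((maxn N0.+1 (2 * jj.+1)) * (maxn N0.+1 (2 * jj.+1)))%:R.
Proof.
move=> hN m i.
set eps : R := (jj.+1)%:R^-1.
set K0 := maxn N0.+1 (2 * jj.+1).
have eps0 : 0 < eps by rewrite invr_gt0 ltr0n.
have hm0 : 0 <= 2 * eps * m%:R by rewrite !mulr_ge0 // ltW.
case: (ltnP m (K0 * K0)) => hm.
  apply: (le_trans (fabs m i)).
  have : (m%:R <= (K0 * K0)%:R :> R) by rewrite ler_nat ltnW.
  move=> h; lra.
have [k /andP[k1 k2]] := sq_ex m.
have kK : (K0 <= k)%N by nia.
have hk0 : (N0 < k)%N by have := leq_maxl N0.+1 (2 * jj.+1); rewrite -/K0; lia.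
have hk2 : (2 * jj.+1 <= k)%N by have := leq_maxr N0.+1 (2 * jj.+1); rewrite -/K0; lia.
have hQ := hN k hk0.
rewrite -mulnn in hQ.
have hf : `|f (k * k)%N i| <= eps * (k * k)%:R.
  have hsq : f (k * k)%N i ^+ 2 <= (eps * (k * k)%:R) ^+ 2.
    apply: le_trans hQ; rewrite /Qs (bigD1 i) //= Sv_sw lerDl.
    by apply: sumr_ge0 => j _; rewrite sqr_ge0.
  have hc : 0 <= eps * (k * k)%:R by rewrite mulr_ge0 // ltW.
  rewrite ler_norml; apply/andP; split; nra.
have hd := fdiff (k * k) (m - k * k) i.
rewrite subnKC // in hd.
have hmk : ((m - k * k)%N%:R <= 2 * k%:R :> R).
  by rewrite -natrM ler_nat; nia.
have hJ : eps * (jj.+1)%:R = 1 by rewrite mulVf // pnatr_eq0.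
have h2k : 2 * (jj.+1)%:R <= k%:R :> R by rewrite -natrM ler_nat.
have hek : 2 <= eps * k%:R.
  have := ler_wpM2l (ltW eps0) h2k; rewrite mulrCA hJ mulr1 //.
have hk0' : 0 <= k%:R :> R by [].
have hkk : 2 * k%:R <= eps * (k * k)%:R :> R.
  rewrite natrM mulrA; have := ler_wpM2r hk0' hek; by [].
have hkm : eps * (k * k)%:R <= eps * m%:R.
  by apply: ler_wpM2l; [exact: ltW | rewrite ler_nat; exact: k1].
have tri : `|f m i| <= `|f (k * k)%N i| + `|f m i - f (k * k)%N i|.
  by rewrite -[X in `|X|](subrKC (f (k * k)%N i)) ler_normD.
have hM : 0 <= (K0 * K0)%:R :> R by [].
lra.
Qed.

Lemma det : (forall j, Good j w) ->
  (fun n : nat => n%:R^-1 *: erw_center X n w) @ \oo --> (0 : 'rV[R]_d).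
Proof.
move=> hG; apply/cvgrPdist_le => e e0.
have he3 : 0 <= 3 / e by rewrite divr_ge0 // ltW.
have hjj := archi_boundP he3.
set jj := Num.Def.archi_bound (3 / e) in hjj.
case: (hG jj) => N0 hN0.
have hb := fbound hN0.
set eps : R := (jj.+1)%:R^-1 in hb.
set M0 := (maxn _ _ * maxn _ _)%N in hb.
have J0 : 0 < (jj.+1)%:R :> R by rewrite ltr0n.
have eps0 : 0 < eps by rewrite invr_gt0.
have hJ : eps * (jj.+1)%:R = 1 by rewrite mulVf // lt0r_neq0.
have eps3 : 3 * eps <= e.
  have h1 : 3 < e * (jj.+1)%:R.
    move: hjj; rewrite ltr_pdivrMr // => h; rewrite -natr1; nra.
  have : 3 * eps < e * (jj.+1)%:R * eps by rewrite ltr_pM2r.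
  by rewrite -mulrA [(jj.+1)%:R * eps]mulrC hJ mulr1 => /ltW.
exists (M0 * jj.+1).+1 => // n /= hn.
rewrite sub0r normrN -[`|_|]/(mx_norm _) mx_normrE.
apply: bigmax_le => [|[a i] _ /=]; first exact: ltW.
rewrite !mxE summxE (ord1 a).
set nr : R := n%:R.
have n0 : 0 < nr by rewrite ltr0n; lia.
have hS : `|\sum_(1 <= k < n.+1) (erw_pos X k w : 'rV[R]_d) 0 i|
            <= nr * (2 * eps * nr + M0%:R).
  apply: (le_trans (ler_norm_sum _ _ _)).
  apply: (@le_trans _ _ (\sum_(1 <= k < n.+1) (2 * eps * nr + M0%:R))).
    apply: ler_sum_nat => k /andP[k1 k2].
    apply: (le_trans (hb k i)); rewrite lerD2r; apply: ler_wpM2l.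
      by apply: mulr_ge0; [rewrite ler0n | exact: ltW].
    by rewrite ler_nat; lia.
  by rewrite sumr_const_nat subn1 /= /nr [n%:R * _]mulr_natl.
have hn' : 0 <= nr^-1 by rewrite invr_ge0 ltW.
rewrite normrM (ger0_norm hn') normrM (ger0_norm hn').
apply: (le_trans (ler_wpM2l hn' (ler_wpM2l hn' hS))).
have -> : nr^-1 * (nr^-1 * (nr * (2 * eps * nr + M0%:R))) = 2 * eps + M0%:R / nr.
  by field; rewrite lt0r_neq0.
have hM : M0%:R / nr <= eps.
  rewrite ler_pdivrMr //.
  have : (M0 * jj.+1)%:R < nr by rewrite /nr ltr_nat.
  rewrite natrM => h.
  have := ler_wpM2r (ltW eps0) (ltW h); rewrite -mulrA [(jj.+1)%:R * eps]mulrC hJ mulr1 => h2.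
  by rewrite mulrC.
lra.
Qed.

End Det.
End Prob.

Unset Implicit Arguments. Set Strict Implicit.

Theorem theorem2p1 (R : realType) (dT : measure_display) (T : measurableType dT)
    (P : probability T R) (d : nat) (p : R) (X : nat -> T -> dir d) :
  (1 <= d)%N -> 0 <= p -> p <= 1 ->
  p < (2 * d%:R + 1) / (4 * d%:R) ->
  is_ERW P p X ->
  {ae P, forall w, (fun n : nat => n%:R^-1 *: erw_center X n w) @ \oo
                     --> (0 : 'rV[R]_d)}.
Proof.
move=> d1 p0 p1 hp hE.
pose y0 : dir d := (Ordinal d1, true).
have ha : 2 * (p - qq d p) < 1.
  have hq := qq_eq p d1.
  set t := qq d p in hq *.
  set D : R := d%:R in hq hp *.
  have D1 : 1 <= D by rewrite /D ler1n.
  have D0 : 0 < 4 * D by lra.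
  move: hp; rewrite ltr_pdivlMr // => hp.
  have h2 : 0 < 2 * D - 1 by lra.
  suff : (2 * D - 1) * (2 * (p - t)) < (2 * D - 1) * 1 by rewrite ltr_pM2l.
  have -> : (2 * D - 1) * (2 * (p - t)) = 2 * p * (2 * D - 1) - 2 * (t * (2 * D - 1)).
    by ring.
  rewrite hq; nra.
have hg := ae_good y0 d1 p0 p1 hE ha.
apply: filterS (ae_foralln hg) => w hw.
exact: (det d1 p0 p1 ha hw).
Qed.
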